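(* Let $S$ be a functional PTS specification. Suppose $\mathrm{WF}_{\lambda S}(\Gamma)$ and either $\Gamma\vdash_{\lambda S}A:s$ or $A=s$ for some $s\in\mathcal S$. If $\Gamma\vdash_{\lambda S^*}M:A$, then there is $M'$ with $M\longrightarrow_\beta^*M'$ and $\Gamma\vdash_{\lambda S}M':A$.
   Context: PTS: specification $S=(\mathcal S,\mathcal A,\mathcal R)$ (sorts, axioms $(s_1:s_2)$, rules $(s_1,s_2,s_3)$), functional meaning $\mathcal A,\mathcal R$ are functional relations; $\lambda S$ has terms $s\mid x\mid M\,N\mid\lambda x:A.M\mid\Pi x:A.B$ and the standard PTS typing rules (axiom rule from $\mathcal A$, product rule from $\mathcal R$, abstraction, application, conversion modulo $\equiv_\beta$); $\mathrm{WF}_{\lambda S}(\Gamma)$ means $\Gamma$ is well formed. A top-sort is a sort $s$ with no $(s:s')\in\mathcal A$. The minimal completion $S^*=(\mathcal S^*,\mathcal A^*,\mathcal R^* )$: $\mathcal S^*=\mathcal S\cup\{\tau\}$ with $\tau\notin\mathcal S$; $\mathcal A^*=\mathcal A\cup\{(s_1:\tau)\mid s_1\in\mathcal S$ a top-sort of $S\}$; $\mathcal R^*=\mathcal R\cup\{(s_1,s_2,\tau)\mid s_1,s_2\in\mathcal S^*$, there is no $s_3$ with $(s_1,s_2,s_3)\in\mathcal R\}$. $\lambda S^*$ is the PTS with this specification. *)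

(* Defs.v *)
From Stdlib Require Import List Arith Relations.
Import ListNotations.
Set Implicit Arguments.

Inductive term (srt : Type) : Type :=
| Srt : srt -> term srt
| Var : nat -> term srt
| App : term srt -> term srt -> term srt
| Lam : term srt -> term srt -> term srt
| Pi  : term srt -> term srt -> term srt.
Arguments Srt {srt} _.
Arguments Var {srt} _.
Arguments App {srt} _ _.
Arguments Lam {srt} _ _.
Arguments Pi {srt} _ _.

Fixpoint lift_rec {srt} (n : nat) (t : term srt) (k : nat) : term srt :=
  match t with
  | Srt s => Srt s
  | Var i => if k <=? i then Var (i + n) else Var i
  | App u v => App (lift_rec n u k) (lift_rec n v k)
  | Lam a u => Lam (lift_rec n a k) (lift_rec n u (S k))
  | Pi a b => Pi (lift_rec n a k) (lift_rec n b (S k))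
  end.
Definition lift {srt} (n : nat) (t : term srt) : term srt := lift_rec n t 0.

Fixpoint subst_rec {srt} (N t : term srt) (k : nat) : term srt :=
  match t with
  | Srt s => Srt s
  | Var i =>
      if i <? k then Var i
      else if i =? k then lift k N
      else Var (pred i)
  | App u v => App (subst_rec N u k) (subst_rec N v k)
  | Lam a u => Lam (subst_rec N a k) (subst_rec N u (S k))
  | Pi a b => Pi (subst_rec N a k) (subst_rec N b (S k))
  end.
Definition subst {srt} (N t : term srt) : term srt := subst_rec N t 0.

Inductive beta1 {srt} : term srt -> term srt -> Prop :=
| beta_redex : forall A M N, beta1 (App (Lam A M) N) (subst N M)
| beta_app_l : forall M M' N, beta1 M M' -> beta1 (App M N) (App M' N)
| beta_app_r : forall M N N', beta1 N N' -> beta1 (App M N) (App M N')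
| beta_lam_l : forall A A' M, beta1 A A' -> beta1 (Lam A M) (Lam A' M)
| beta_lam_r : forall A M M', beta1 M M' -> beta1 (Lam A M) (Lam A M')
| beta_pi_l  : forall A A' B, beta1 A A' -> beta1 (Pi A B) (Pi A' B)
| beta_pi_r  : forall A B B', beta1 B B' -> beta1 (Pi A B) (Pi A B').

Definition beta_star {srt} : relation (term srt) := clos_refl_trans _ beta1.
Definition beta_conv {srt} : relation (term srt) := clos_refl_sym_trans _ beta1.

(* A PTS specification: sorts = all inhabitants of srt; axioms; rules. *)
Record spec (srt : Type) : Type := Spec {
  ax : srt -> srt -> Prop;
  rl : srt -> srt -> srt -> Prop
}.
Arguments ax {srt} _ _ _.
Arguments rl {srt} _ _ _ _.

Definition functional {srt} (S : spec srt) : Prop :=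
  (forall s s1 s2, ax S s s1 -> ax S s s2 -> s1 = s2) /\
  (forall s1 s2 s3 s3', rl S s1 s2 s3 -> rl S s1 s2 s3' -> s3 = s3').

Definition top_sort {srt} (S : spec srt) (s : srt) : Prop :=
  ~ exists s', ax S s s'.

(* The minimal completion S^*: sorts option srt, with None playing tau. *)
Definition star_ax {srt} (S : spec srt) (x y : option srt) : Prop :=
  match x, y with
  | Some s1, Some s2 => ax S s1 s2
  | Some s1, None => top_sort S s1
  | None, _ => False
  end.

Definition star_rl {srt} (S : spec srt) (x y z : option srt) : Prop :=
  match z with
  | Some s3 => exists s1 s2, x = Some s1 /\ y = Some s2 /\ rl S s1 s2 s3
  | None => ~ exists s1 s2 s3, x = Some s1 /\ y = Some s2 /\ rl S s1 s2 s3
  end.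

Definition completion {srt} (S : spec srt) : spec (option srt) :=
  Spec (star_ax S) (star_rl S).

Fixpoint emb {srt} (t : term srt) : term (option srt) :=
  match t with
  | Srt s => Srt (Some s)
  | Var i => Var i
  | App u v => App (emb u) (emb v)
  | Lam a u => Lam (emb a) (emb u)
  | Pi a b => Pi (emb a) (emb b)
  end.

(* Contexts: lists, head = most recent declaration (de Bruijn index 0). *)
Definition context srt := list (term srt).

Inductive wf {srt} (P : spec srt) : context srt -> Prop :=
| wf_nil : wf P []
| wf_cons : forall G A s, typ P G A (Srt s) -> wf P (A :: G)
with typ {srt} (P : spec srt) : context srt -> term srt -> term srt -> Prop :=
| typ_ax : forall G s1 s2, wf P G -> ax P s1 s2 -> typ P G (Srt s1) (Srt s2)
| typ_var : forall G n A, wf P G -> nth_error G n = Some A ->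
    typ P G (Var n) (lift (S n) A)
| typ_pi : forall G A B s1 s2 s3,
    typ P G A (Srt s1) -> typ P (A :: G) B (Srt s2) -> rl P s1 s2 s3 ->
    typ P G (Pi A B) (Srt s3)
| typ_lam : forall G A B M s,
    typ P (A :: G) M B -> typ P G (Pi A B) (Srt s) ->
    typ P G (Lam A M) (Pi A B)
| typ_app : forall G M N A B,
    typ P G M (Pi A B) -> typ P G N A -> typ P G (App M N) (subst N B)
| typ_conv : forall G M A B s,
    typ P G M A -> typ P G B (Srt s) -> beta_conv A B -> typ P G M B.

(* Main.v *)
Require Import Defs.
From Stdlib Require Import List Arith Lia Relations.
Import ListNotations.

Definition upr (xi : nat -> nat) : nat -> nat :=
  fun i => match i with 0 => 0 | S j => S (xi j) end.

Fixpoint ren {srt} (xi : nat -> nat) (t : term srt) : term srt :=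
  match t with
  | Srt s => Srt s
  | Var i => Var (xi i)
  | App u v => App (ren xi u) (ren xi v)
  | Lam a u => Lam (ren xi a) (ren (upr xi) u)
  | Pi a b => Pi (ren xi a) (ren (upr xi) b)
  end.

Definition up {srt} (sg : nat -> term srt) : nat -> term srt :=
  fun i => match i with 0 => Var 0 | S j => ren S (sg j) end.

Fixpoint inst {srt} (sg : nat -> term srt) (t : term srt) : term srt :=
  match t with
  | Srt s => Srt s
  | Var i => sg i
  | App u v => App (inst sg u) (inst sg v)
  | Lam a u => Lam (inst sg a) (inst (up sg) u)
  | Pi a b => Pi (inst sg a) (inst (up sg) b)
  end.

Definition liftf (n k : nat) : nat -> nat := fun i => if k <=? i then i + n else i.
Definition substf {srt} (N : term srt) (k : nat) : nat -> term srt :=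
  fun i => if i <? k then Var i else if i =? k then lift k N else Var (pred i).

Section Alg.
Context {srt : Type}.
Notation tm := (term srt).

Lemma ren_ext : forall (t : tm) xi zeta, (forall i, xi i = zeta i) -> ren xi t = ren zeta t.
Proof.
  induction t; intros xi zeta H; simpl; f_equal; auto;
  (apply IHt2 || apply IHt1); intros [|i]; simpl; auto.
Qed.

Lemma up_ext : forall (sg tau : nat -> tm), (forall i, sg i = tau i) -> forall i, up sg i = up tau i.
Proof. intros sg tau H [|i]; simpl; auto. rewrite H; auto. Qed.

Lemma inst_ext : forall (t : tm) sg tau, (forall i, sg i = tau i) -> inst sg t = inst tau t.
Proof.
  induction t; intros sg tau H; simpl; f_equal; auto; apply IHt2; apply up_ext; auto.
Qed.

Lemma lift_ren : forall (t : tm) n k, lift_rec n t k = ren (liftf n k) t.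
Proof.
  induction t; intros n0 k; simpl; f_equal; auto.
  - unfold liftf; destruct (k <=? n); auto.
  - rewrite IHt2; apply ren_ext; intros [|i]; unfold liftf; simpl; auto; destruct (k <=? i); auto.
  - rewrite IHt2; apply ren_ext; intros [|i]; unfold liftf; simpl; auto; destruct (k <=? i); auto.
Qed.

Lemma ren_ren : forall (t : tm) xi zeta, ren xi (ren zeta t) = ren (fun i => xi (zeta i)) t.
Proof.
  induction t; intros xi zeta; simpl; f_equal; auto;
  rewrite IHt2; apply ren_ext; intros [|i]; simpl; auto.
Qed.

Lemma inst_ren : forall (t : tm) sg xi, inst sg (ren xi t) = inst (fun i => sg (xi i)) t.
Proof.
  induction t; intros sg xi; simpl; f_equal; auto;
  rewrite IHt2; apply inst_ext; intros [|i]; simpl; auto.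
Qed.

Lemma ren_inst : forall (t : tm) sg xi, ren xi (inst sg t) = inst (fun i => ren xi (sg i)) t.
Proof.
  induction t; intros sg xi; simpl; f_equal; auto;
  rewrite IHt2; apply inst_ext; intros [|i]; simpl; auto;
  rewrite !ren_ren; apply ren_ext; intros; simpl; auto.
Qed.

Lemma inst_inst : forall (t : tm) sg tau, inst sg (inst tau t) = inst (fun i => inst sg (tau i)) t.
Proof.
  induction t; intros sg tau; simpl; f_equal; auto;
  rewrite IHt2; apply inst_ext; intros [|i]; simpl; auto;
  rewrite inst_ren, ren_inst; apply inst_ext; intros; simpl; auto.
Qed.

Lemma ren_as_inst : forall (t : tm) xi, ren xi t = inst (fun i => Var (xi i)) t.
Proof.
  induction t; intros xi; simpl; f_equal; auto;
  rewrite IHt2; apply inst_ext; intros [|i]; simpl; auto.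
Qed.

Lemma inst_var : forall (t : tm), inst Var t = t.
Proof.
  induction t; simpl; f_equal; auto;
  rewrite <- IHt2 at 2; apply inst_ext; intros [|i]; simpl; auto.
Qed.

Lemma ren_id : forall (t : tm), ren (fun i => i) t = t.
Proof. intros t. rewrite ren_as_inst. apply inst_var. Qed.

Lemma up_substf : forall (N : tm) k i, up (substf N k) i = substf N (S k) i.
Proof.
  intros N k [|i]; unfold substf; simpl; auto.
  destruct (Nat.ltb_spec i k); destruct (Nat.ltb_spec (S i) (S k)); try lia; auto.
  destruct (Nat.eqb_spec i k); destruct (Nat.eqb_spec (S i) (S k)); try lia; simpl.
  - subst; unfold lift; rewrite !lift_ren, ren_ren; apply ren_ext; intros j; unfold liftf; simpl; lia.
  - f_equal; lia.
Qed.

Lemma subst_inst : forall (t : tm) N k, subst_rec N t k = inst (substf N k) t.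
Proof.
  induction t; intros N k; simpl; f_equal; auto;
  rewrite IHt2; apply inst_ext; intros; rewrite up_substf; auto.
Qed.

Lemma lift_inst : forall (t : tm) n k, lift_rec n t k = inst (fun i => Var (liftf n k i)) t.
Proof. intros; rewrite lift_ren, ren_as_inst; auto. Qed.

Lemma lift0 : forall (t : tm) k, lift_rec 0 t k = t.
Proof.
  intros; rewrite lift_ren. rewrite <- (ren_id t) at 2. apply ren_ext.
  intros; unfold liftf; destruct (k <=? i); lia.
Qed.

Lemma lift_lift : forall (t : tm) n m, lift n (lift m t) = lift (n + m) t.
Proof.
  intros; unfold lift; rewrite !lift_ren, ren_ren; apply ren_ext; intros; unfold liftf; simpl; lia.
Qed.

Lemma lift_rec_lift_rec1 : forall (t : tm) n m, lift_rec n (lift_rec m t 1) 1 = lift_rec (n + m) t 1.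
Proof.
  intros; rewrite !lift_ren, ren_ren; apply ren_ext; intros [|i]; unfold liftf; simpl; lia.
Qed.

Lemma inst_up_lift1 : forall (t : tm) sg, inst (up sg) (lift 1 t) = lift 1 (inst sg t).
Proof.
  intros; unfold lift; rewrite !lift_ren, inst_ren, ren_inst; apply inst_ext; intros i;
  unfold liftf; simpl; rewrite Nat.add_1_r; simpl; apply ren_ext; intros; unfold liftf; simpl; lia.
Qed.

Lemma inst_lift_S : forall (t : tm) sg n, inst sg (lift (S n) t) = inst (fun i => sg (S n + i)) t.
Proof.
  intros; unfold lift; rewrite lift_ren, inst_ren; apply inst_ext; intros i; unfold liftf; simpl; f_equal; lia.
Qed.

Lemma inst_subst : forall (t : tm) N sg, inst sg (subst N t) = subst (inst sg N) (inst (up sg) t).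
Proof.
  intros; unfold subst; rewrite !subst_inst, !inst_inst; apply inst_ext; intros [|i]; unfold substf; simpl.
  - unfold lift; rewrite !lift0; auto.
  - rewrite inst_ren. rewrite <- (inst_var (sg i)) at 1. apply inst_ext; intros j; unfold substf; simpl; reflexivity.
Qed.

Lemma ren_subst : forall (t : tm) N xi, ren xi (subst N t) = subst (ren xi N) (ren (upr xi) t).
Proof.
  intros; rewrite !ren_as_inst, inst_subst; f_equal. apply inst_ext; intros [|i]; simpl; auto.
Qed.

Lemma lift_subst : forall (t : tm) N k, lift k (subst N t) = subst (lift k N) (lift_rec k t 1).
Proof.
  intros; unfold lift; rewrite !lift_ren, ren_subst; f_equal; apply ren_ext; intros [|i]; unfold liftf; simpl; auto.
Qed.

Lemma subst_lift1 : forall (t : tm) N, subst N (lift 1 t) = t.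
Proof.
  intros; unfold subst, lift; rewrite subst_inst, lift_ren, inst_ren.
  rewrite <- (inst_var t) at 2; apply inst_ext; intros i; unfold substf, liftf; simpl.
  rewrite Nat.add_1_r; simpl; auto.
Qed.

Definition scons (N : tm) (sg : nat -> tm) : nat -> tm :=
  fun i => match i with 0 => N | S j => sg j end.

Lemma subst_scons : forall (t : tm) N sg, subst N (inst (up sg) t) = inst (scons N sg) t.
Proof.
  intros; unfold subst; rewrite subst_inst, inst_inst; apply inst_ext; intros [|i]; simpl.
  - unfold substf; simpl; unfold lift; apply lift0.
  - rewrite inst_ren. rewrite <- (inst_var (sg i)) at 2. apply inst_ext; intros j; unfold substf; simpl.
    f_equal; lia.
Qed.

Lemma lift_inst_up : forall (t : tm) k sg,
  lift_rec k (inst (up sg) t) 1 = inst (up (fun i => lift k (sg i))) t.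
Proof.
  intros; rewrite lift_ren, ren_inst; apply inst_ext; intros [|i]; simpl; auto.
  unfold lift; rewrite !lift_ren, !ren_ren; apply ren_ext; intros j; unfold liftf; simpl. lia.
Qed.

Lemma lift_inst_comm : forall (t : tm) k sg, lift k (inst sg t) = inst (fun i => lift k (sg i)) t.
Proof.
  intros; unfold lift at 1; rewrite lift_ren, ren_inst; apply inst_ext; intros i; unfold lift; rewrite lift_ren; auto.
Qed.

End Alg.

Set Implicit Arguments.

Section Beta.
Context {srt : Type}.
Notation tm := (term srt).

Lemma bs_refl : forall (M : tm), beta_star M M.
Proof. intros; apply rt_refl. Qed.
Lemma bs_trans : forall (M N P : tm), beta_star M N -> beta_star N P -> beta_star M P.
Proof. intros; eapply rt_trans; eauto. Qed.
Lemma bs_step : forall (M N : tm), beta1 M N -> beta_star M N.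
Proof. intros; apply rt_step; auto. Qed.
Lemma bc_refl : forall (M : tm), beta_conv M M.
Proof. intros; apply rst_refl. Qed.
Lemma bc_sym : forall (M N : tm), beta_conv M N -> beta_conv N M.
Proof. intros; apply rst_sym; auto. Qed.
Lemma bc_trans : forall (M N P : tm), beta_conv M N -> beta_conv N P -> beta_conv M P.
Proof. intros; eapply rst_trans; eauto. Qed.
Lemma bs_bc : forall (M N : tm), beta_star M N -> beta_conv M N.
Proof. intros M N H; induction H; [apply rst_step; auto | apply rst_refl | eapply rst_trans; eauto]. Qed.

Lemma bs_ctx : forall (f : tm -> tm), (forall M M', beta1 M M' -> beta1 (f M) (f M')) ->
  forall M M', beta_star M M' -> beta_star (f M) (f M').
Proof.
  intros f Hf M M' H; induction H; [apply bs_step; auto | apply bs_refl | eapply bs_trans; eauto].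
Qed.
Lemma bc_ctx : forall (f : tm -> tm), (forall M M', beta1 M M' -> beta1 (f M) (f M')) ->
  forall M M', beta_conv M M' -> beta_conv (f M) (f M').
Proof.
  intros f Hf M M' H; induction H; [apply rst_step; auto | apply rst_refl | apply rst_sym; auto | eapply rst_trans; eauto].
Qed.

Lemma bs_app : forall (M M' N N' : tm), beta_star M M' -> beta_star N N' -> beta_star (App M N) (App M' N').
Proof.
  intros. apply bs_trans with (App M' N).
  - apply (bs_ctx (fun x => App x N)); auto; intros; constructor; auto.
  - apply (bs_ctx (fun x => App M' x)); auto; intros; constructor; auto.
Qed.
Lemma bs_lam : forall (M M' N N' : tm), beta_star M M' -> beta_star N N' -> beta_star (Lam M N) (Lam M' N').
Proof.
  intros. apply bs_trans with (Lam M' N).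
  - apply (bs_ctx (fun x => Lam x N)); auto; intros; constructor; auto.
  - apply (bs_ctx (fun x => Lam M' x)); auto; intros; constructor; auto.
Qed.
Lemma bs_pi : forall (M M' N N' : tm), beta_star M M' -> beta_star N N' -> beta_star (Pi M N) (Pi M' N').
Proof.
  intros. apply bs_trans with (Pi M' N).
  - apply (bs_ctx (fun x => Pi x N)); auto; intros; constructor; auto.
  - apply (bs_ctx (fun x => Pi M' x)); auto; intros; constructor; auto.
Qed.
Lemma bc_app : forall (M M' N N' : tm), beta_conv M M' -> beta_conv N N' -> beta_conv (App M N) (App M' N').
Proof.
  intros. apply bc_trans with (App M' N).
  - apply (bc_ctx (fun x => App x N)); auto; intros; constructor; auto.
  - apply (bc_ctx (fun x => App M' x)); auto; intros; constructor; auto.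
Qed.
Lemma bc_pi : forall (M M' N N' : tm), beta_conv M M' -> beta_conv N N' -> beta_conv (Pi M N) (Pi M' N').
Proof.
  intros. apply bc_trans with (Pi M' N).
  - apply (bc_ctx (fun x => Pi x N)); auto; intros; constructor; auto.
  - apply (bc_ctx (fun x => Pi M' x)); auto; intros; constructor; auto.
Qed.

Lemma beta1_ren : forall (M M' : tm), beta1 M M' -> forall xi, beta1 (ren xi M) (ren xi M').
Proof.
  intros M M' H; induction H; intros xi; simpl; try (constructor; auto).
  rewrite ren_subst; constructor.
Qed.

Lemma beta1_inst : forall (M M' : tm), beta1 M M' -> forall sg, beta1 (inst sg M) (inst sg M').
Proof.
  intros M M' H; induction H; intros sg; simpl; try (constructor; auto).
  rewrite inst_subst; constructor.
Qed.

Lemma bs_inst : forall (M M' : tm) sg, beta_star M M' -> beta_star (inst sg M) (inst sg M').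
Proof. intros; apply (bs_ctx (inst sg)); auto; intros; apply beta1_inst; auto. Qed.
Lemma bc_inst : forall (M M' : tm) sg, beta_conv M M' -> beta_conv (inst sg M) (inst sg M').
Proof. intros; apply (bc_ctx (inst sg)); auto; intros; apply beta1_inst; auto. Qed.
Lemma bs_ren : forall (M M' : tm) xi, beta_star M M' -> beta_star (ren xi M) (ren xi M').
Proof. intros; apply (bs_ctx (ren xi)); auto; intros; apply beta1_ren; auto. Qed.

Lemma bs_inst_sub : forall (M : tm) sg tau, (forall i, beta_star (sg i) (tau i)) ->
  beta_star (inst sg M) (inst tau M).
Proof.
  induction M; intros sg tau H; simpl; auto using bs_refl, bs_app, bs_lam, bs_pi.
  - apply bs_lam; auto. apply IHM2. intros [|i]; simpl; auto using bs_refl, bs_ren.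
  - apply bs_pi; auto. apply IHM2. intros [|i]; simpl; auto using bs_refl, bs_ren.
Qed.

Lemma bs_subst : forall (M M' N N' : tm), beta_star M M' -> beta_star N N' ->
  beta_star (subst N M) (subst N' M').
Proof.
  intros. unfold subst. rewrite !subst_inst. apply bs_trans with (inst (substf N' 0) M).
  - apply bs_inst_sub. intros [|i]; unfold substf; simpl; auto using bs_refl.
    unfold lift; rewrite !lift0; auto.
  - apply bs_inst; auto.
Qed.
Lemma bc_subst_r : forall (M M' N : tm), beta_conv M M' -> beta_conv (subst N M) (subst N M').
Proof. intros; unfold subst; rewrite !subst_inst; apply bc_inst; auto. Qed.
Lemma bc_lift : forall (M M' : tm) n k, beta_conv M M' -> beta_conv (lift_rec n M k) (lift_rec n M' k).
Proof. intros; rewrite !lift_inst; apply bc_inst; auto. Qed.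
Lemma bs_lift : forall (M M' : tm) n k, beta_star M M' -> beta_star (lift_rec n M k) (lift_rec n M' k).
Proof. intros; rewrite !lift_inst; apply bs_inst; auto. Qed.

Inductive par : tm -> tm -> Prop :=
| p_srt : forall s, par (Srt s) (Srt s)
| p_var : forall n, par (Var n) (Var n)
| p_app : forall M M' N N', par M M' -> par N N' -> par (App M N) (App M' N')
| p_lam : forall M M' N N', par M M' -> par N N' -> par (Lam M N) (Lam M' N')
| p_pi : forall M M' N N', par M M' -> par N N' -> par (Pi M N) (Pi M' N')
| p_beta : forall A M M' N N', par M M' -> par N N' -> par (App (Lam A M) N) (subst N' M').

Lemma par_refl : forall (M : tm), par M M.
Proof. induction M; constructor; auto. Qed.

Lemma beta1_par : forall M M', beta1 M M' -> par M M'.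
Proof. intros M M' H; induction H; constructor; auto using par_refl. Qed.

Lemma par_bs : forall M M', par M M' -> beta_star M M'.
Proof.
  intros M M' H; induction H; auto using bs_refl, bs_app, bs_lam, bs_pi.
  apply bs_trans with (App (Lam A M') N'). apply bs_app; auto. apply bs_lam; auto using bs_refl.
  apply bs_step; constructor.
Qed.

Lemma par_ren : forall M M', par M M' -> forall xi, par (ren xi M) (ren xi M').
Proof.
  intros M M' H; induction H; intros xi; simpl; try (constructor; auto; fail).
  rewrite ren_subst; constructor; auto.
Qed.

Lemma par_inst : forall M M', par M M' -> forall sg tau, (forall i, par (sg i) (tau i)) ->
  par (inst sg M) (inst tau M').
Proof.
  assert (Hup : forall sg tau, (forall i, par (sg i) (tau i)) -> forall i, par (up sg i) (up tau i)).
  { intros sg tau H [|i]; simpl; [constructor | apply par_ren; auto]. }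
  intros M M' H; induction H; intros sg tau Hs; simpl; try (constructor; auto; fail); auto.
  rewrite inst_subst; constructor; auto.
Qed.

Lemma par_subst : forall M M' N N', par M M' -> par N N' -> par (subst N M) (subst N' M').
Proof.
  intros; unfold subst; rewrite !subst_inst; apply par_inst; auto.
  intros [|i]; unfold substf; simpl; [unfold lift; rewrite !lift0; auto | constructor].
Qed.

Fixpoint rho (t : tm) : tm :=
  match t with
  | App u v => match u with
               | Lam a b => subst (rho v) (rho b)
               | _ => App (rho u) (rho v)
               end
  | Lam a u => Lam (rho a) (rho u)
  | Pi a b => Pi (rho a) (rho b)
  | x => x
  end.

Lemma par_rho : forall M M', par M M' -> par M' (rho M).
Proof.
  intros M M' H; induction H; simpl; try (constructor; auto).
  - destruct M; try (constructor; auto).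
    inversion H; subst. simpl in IHpar1. inversion IHpar1; subst. constructor; auto.
  - apply par_subst; auto.
Qed.

Lemma strip : forall (M M2 : tm), beta_star M M2 -> forall M1, par M M1 ->
  exists P, beta_star M1 P /\ par M2 P.
Proof.
  intros M M2 H. apply clos_rt_rt1n in H. induction H; intros M1 HM1.
  - exists M1; split; auto using bs_refl.
  - pose proof (par_rho HM1) as H1. pose proof (par_rho (beta1_par H)) as H2.
    destruct (IHclos_refl_trans_1n _ H2) as [P [HP1 HP2]].
    exists P; split; auto. eapply bs_trans; [apply par_bs; eauto | auto].
Qed.

Lemma confluence : forall (M M1 M2 : tm), beta_star M M1 -> beta_star M M2 ->
  exists P, beta_star M1 P /\ beta_star M2 P.
Proof.
  intros M M1 M2 H. revert M2. apply clos_rt_rt1n in H. induction H; intros M2 H2.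
  - exists M2; split; auto using bs_refl.
  - destruct (strip H2 (beta1_par H)) as [P [HP1 HP2]].
    destruct (IHclos_refl_trans_1n _ HP1) as [Q [HQ1 HQ2]].
    exists Q; split; auto. eapply bs_trans; [apply par_bs; eauto | auto].
Qed.

Lemma church_rosser : forall (M N : tm), beta_conv M N -> exists P, beta_star M P /\ beta_star N P.
Proof.
  intros M N H; induction H.
  - exists y; split; auto using bs_refl, bs_step.
  - exists x; split; auto using bs_refl.
  - destruct IHclos_refl_sym_trans as [P [? ?]]; exists P; auto.
  - destruct IHclos_refl_sym_trans1 as [P [? ?]]; destruct IHclos_refl_sym_trans2 as [Q [? ?]].
    destruct (confluence H2 H3) as [R [? ?]]. exists R; split; eapply bs_trans; eauto.
Qed.

Lemma star_srt : forall s (T : tm), beta_star (Srt s) T -> T = Srt s.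
Proof.
  intros s T H. apply clos_rt_rt1n in H. remember (Srt s) as X. induction H; subst; auto.
  inversion H.
Qed.

Lemma star_pi : forall (A B T : tm), beta_star (Pi A B) T ->
  exists A' B', T = Pi A' B' /\ beta_star A A' /\ beta_star B B'.
Proof.
  intros A B T H. apply clos_rt_rt1n in H. remember (Pi A B) as X eqn:E. revert A B E. induction H; intros A B E; subst.
  - exists A, B; auto using bs_refl.
  - inversion H; subst.
    + destruct (IHclos_refl_trans_1n A' B eq_refl) as [A2 [B2 [? [? ?]]]].
      exists A2, B2; repeat split; auto. eapply bs_trans; eauto using bs_step.
    + destruct (IHclos_refl_trans_1n A B' eq_refl) as [A2 [B2 [? [? ?]]]].
      exists A2, B2; repeat split; auto. eapply bs_trans; eauto using bs_step.
Qed.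

Lemma conv_srt : forall s1 s2, beta_conv (Srt s1 : tm) (Srt s2) -> s1 = s2.
Proof.
  intros s1 s2 H; destruct (church_rosser H) as [P [H1 H2]].
  apply star_srt in H1; apply star_srt in H2; congruence.
Qed.

Lemma conv_pi_srt : forall (A B : tm) s, ~ beta_conv (Pi A B) (Srt s).
Proof.
  intros A B s H; destruct (church_rosser H) as [P [H1 H2]].
  apply star_srt in H2; apply star_pi in H1 as [? [? [? _]]]; congruence.
Qed.

Lemma conv_pi : forall (A B A' B' : tm), beta_conv (Pi A B) (Pi A' B') ->
  beta_conv A A' /\ beta_conv B B'.
Proof.
  intros A B A' B' H; destruct (church_rosser H) as [P [H1 H2]].
  apply star_pi in H1 as [A1 [B1 [E1 [? ?]]]]; apply star_pi in H2 as [A2 [B2 [E2 [? ?]]]].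
  subst; inversion E2; subst.
  split; eapply bc_trans; eauto using bs_bc, bc_sym.
Qed.

End Beta.

Set Implicit Arguments.

Section Meta.
Context {srt : Type} (P : spec srt).
Notation tm := (term srt).
Notation typ := (typ P).
Notation wf := (wf P).

Lemma typ_wf : forall G M T, typ G M T -> wf G.
Proof. intros G M T H; induction H; auto. Qed.

Lemma gen_srt : forall G s T, typ G (Srt s) T -> exists s', ax P s s' /\ beta_conv (Srt s') T.
Proof.
  intros G s T H; remember (Srt s) as X; induction H; try discriminate.
  - inversion HeqX; subst; exists s2; split; auto using bc_refl.
  - destruct (IHtyp1 HeqX) as [s' [? ?]]; exists s'; split; eauto using bc_trans.
Qed.

Lemma gen_var : forall G n T, typ G (Var n) T ->
  exists A, nth_error G n = Some A /\ beta_conv (lift (S n) A) T.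
Proof.
  intros G n T H; remember (Var n) as X; induction H; try discriminate.
  - inversion HeqX; subst; exists A; split; auto using bc_refl.
  - destruct (IHtyp1 HeqX) as [A' [? ?]]; exists A'; split; eauto using bc_trans.
Qed.

Lemma gen_pi : forall G A B T, typ G (Pi A B) T ->
  exists s1 s2 s3, typ G A (Srt s1) /\ typ (A :: G) B (Srt s2) /\ rl P s1 s2 s3 /\ beta_conv (Srt s3) T.
Proof.
  intros G A B T H; remember (Pi A B) as X; induction H; try discriminate.
  - inversion HeqX; subst; exists s1, s2, s3; repeat split; auto using bc_refl.
  - destruct (IHtyp1 HeqX) as [s1 [s2 [s3 [? [? [? ?]]]]]]; exists s1, s2, s3; repeat split; eauto using bc_trans.
Qed.

Lemma gen_lam : forall G A M T, typ G (Lam A M) T ->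
  exists B s, typ (A :: G) M B /\ typ G (Pi A B) (Srt s) /\ beta_conv (Pi A B) T.
Proof.
  intros G A M T H; remember (Lam A M) as X; induction H; try discriminate.
  - inversion HeqX; subst; exists B, s; repeat split; auto using bc_refl.
  - destruct (IHtyp1 HeqX) as [B' [s' [? [? ?]]]]; exists B', s'; repeat split; eauto using bc_trans.
Qed.

Lemma gen_app : forall G M N T, typ G (App M N) T ->
  exists A B, typ G M (Pi A B) /\ typ G N A /\ beta_conv (subst N B) T.
Proof.
  intros G M N T H; remember (App M N) as X; induction H; try discriminate.
  - inversion HeqX; subst; exists A, B; repeat split; auto using bc_refl.
  - destruct (IHtyp1 HeqX) as [A' [B' [? [? ?]]]]; exists A', B'; repeat split; eauto using bc_trans.
Qed.

Definition rtyped (G : list tm) (xi : nat -> nat) (D : list tm) :=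
  forall n A, nth_error G n = Some A ->
  exists A', nth_error D (xi n) = Some A' /\ ren xi (lift (S n) A) = lift (S (xi n)) A'.

Lemma ren_up_lift1 : forall (X : tm) xi, ren (upr xi) (lift 1 X) = lift 1 (ren xi X).
Proof.
  intros; unfold lift; rewrite !lift_ren, !ren_ren; apply ren_ext; intros; unfold liftf; simpl.
  rewrite !Nat.add_1_r; auto.
Qed.

Lemma lift_S_split : forall (X : tm) n, lift (S n) X = lift 1 (lift n X).
Proof. intros; rewrite lift_lift; auto. Qed.

Lemma rtyped_up : forall G xi D A, rtyped G xi D -> rtyped (A :: G) (upr xi) (ren xi A :: D).
Proof.
  intros G xi D A H [|n] B E; simpl in *.
  - inversion E; subst; exists (ren xi B); split; auto. apply ren_up_lift1.
  - destruct (H n B E) as [A' [E1 E2]]; exists A'; split; auto.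
    rewrite lift_S_split, ren_up_lift1, E2, lift_lift; auto.
Qed.

Lemma typ_ren : forall G M T, typ G M T -> forall D xi, wf D -> rtyped G xi D -> typ D (ren xi M) (ren xi T).
Proof.
  intros G M T H; induction H; intros D xi HD Hr; simpl.
  - constructor; auto.
  - destruct (Hr n A H0) as [A' [E1 E2]]; rewrite E2; constructor; auto.
  - assert (HA := IHtyp1 D xi HD Hr); simpl in HA.
    econstructor; eauto. apply IHtyp2; [econstructor; eauto | apply rtyped_up; auto].
  - assert (HP := IHtyp2 D xi HD Hr); simpl in HP.
    destruct (gen_pi HP) as [s1 [? [? [? _]]]].
    econstructor; eauto. apply IHtyp1; [econstructor; eauto | apply rtyped_up; auto].
  - rewrite ren_subst. econstructor; [apply (IHtyp1 D xi HD Hr) | apply IHtyp2; auto].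
  - econstructor; [apply IHtyp1 | apply (IHtyp2 D xi HD Hr) |]; auto.
    rewrite !ren_as_inst; apply bc_inst; auto.
Qed.

Lemma lift1_ren : forall (X : tm), lift 1 X = ren S X.
Proof. intros; unfold lift; rewrite lift_ren; apply ren_ext; intros; unfold liftf; simpl; lia. Qed.

Lemma weak1 : forall G M T X, typ G M T -> wf (X :: G) -> typ (X :: G) (lift 1 M) (lift 1 T).
Proof.
  intros. rewrite !lift1_ren. eapply typ_ren; eauto.
  intros n A E; exists A; simpl; split; auto. rewrite <- lift1_ren, lift_lift; auto.
Qed.

Lemma weakn : forall D M T G0, typ D M T -> wf (G0 ++ D) ->
  typ (G0 ++ D) (lift (length G0) M) (lift (length G0) T).
Proof.
  intros. unfold lift; rewrite !lift_ren. eapply typ_ren; eauto.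
  intros n A E; exists A; split.
  - unfold liftf; simpl. rewrite nth_error_app2; [|lia]. rewrite <- E; f_equal; lia.
  - unfold lift; rewrite !lift_ren, ren_ren; apply ren_ext; intros; unfold liftf; simpl; lia.
Qed.

Definition styped (G : list tm) (sg : nat -> tm) (D : list tm) :=
  forall n A, nth_error G n = Some A -> typ D (sg n) (inst sg (lift (S n) A)).

Lemma styped_up : forall G sg D A s, styped G sg D -> typ D (inst sg A) (Srt s) ->
  styped (A :: G) (up sg) (inst sg A :: D).
Proof.
  intros G sg D A s H HA [|n] B E; simpl in *.
  - inversion E; subst. rewrite inst_up_lift1. constructor; auto. econstructor; eauto.
  - rewrite lift_S_split, inst_up_lift1, <- lift1_ren. apply weak1; auto. econstructor; eauto.
Qed.

Lemma typ_inst : forall G M T, typ G M T -> forall D sg, wf D -> styped G sg D -> typ D (inst sg M) (inst sg T).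
Proof.
  intros G M T H; induction H; intros D sg HD Hs; simpl.
  - constructor; auto.
  - apply Hs; auto.
  - assert (HA := IHtyp1 D sg HD Hs); simpl in HA.
    econstructor; eauto. apply IHtyp2; [econstructor; eauto | eapply styped_up; eauto].
  - assert (HP := IHtyp2 D sg HD Hs); simpl in HP.
    destruct (gen_pi HP) as [s1 [? [? [? _]]]].
    econstructor; eauto. apply IHtyp1; [econstructor; eauto | eapply styped_up; eauto].
  - rewrite inst_subst. econstructor; [apply (IHtyp1 D sg HD Hs) | apply IHtyp2; auto].
  - econstructor; [apply IHtyp1 | apply (IHtyp2 D sg HD Hs) |]; auto.
    apply bc_inst; auto.
Qed.

Lemma subst_as_inst : forall (M N : tm), subst N M = inst (scons N Var) M.
Proof.
  intros. rewrite <- subst_scons. f_equal. rewrite <- (inst_var M) at 1. apply inst_ext.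
  intros [|i]; simpl; auto.
Qed.

Lemma inst_shift_var : forall (t : tm) k, inst (fun i => Var (k + i)) t = lift k t.
Proof. intros; unfold lift; rewrite lift_inst; apply inst_ext; intros; unfold liftf; simpl; f_equal; lia. Qed.

Lemma typ_subst : forall G A M T N, typ (A :: G) M T -> typ G N A -> typ G (subst N M) (subst N T).
Proof.
  intros. rewrite !subst_as_inst. eapply typ_inst; eauto.
  - eapply typ_wf; eauto.
  - intros [|n] B E; simpl in *.
    + inversion E; subst. rewrite <- subst_as_inst, subst_lift1; auto.
    + rewrite inst_lift_S. simpl.
      replace (inst (fun i => Var (S (n + i))) B) with (lift (S n) B) by (rewrite <- inst_shift_var; reflexivity).
      constructor; auto. eapply typ_wf; eauto.
Qed.

Lemma wf_nth : forall G n A, wf G -> nth_error G n = Some A -> exists s, typ G (lift (S n) A) (Srt s).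
Proof.
  induction G as [|B G IH]; intros n A HG E; [destruct n; discriminate|].
  inversion HG as [|G0 B0 s Hs]; subst. destruct n as [|n]; simpl in E.
  - inversion E; subst. exists s. apply (weak1 (T := Srt s)); auto.
  - destruct (IH n A (typ_wf Hs) E) as [s' Hs']. exists s'.
    rewrite lift_S_split. apply (weak1 (T := Srt s')); auto.
Qed.

Lemma type_correct : forall G M T, typ G M T -> (exists s, T = Srt s) \/ (exists s, typ G T (Srt s)).
Proof.
  intros G M T H; induction H; eauto.
  - right; eapply wf_nth; eauto.
  - destruct IHtyp1 as [[s E] | [s HP]]; [discriminate|].
    destruct (gen_pi HP) as [s1 [s2 [s3 [? [HB [? _]]]]]].
    right; exists s2. apply (typ_subst (T := Srt s2) HB); auto.
Qed.

Lemma ctx_conv0 : forall G A A' M T s, typ (A :: G) M T -> typ G A' (Srt s) -> beta_conv A A' ->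
  typ (A' :: G) M T.
Proof.
  intros G A A' M T s H HA' Hc. rewrite <- (inst_var M), <- (inst_var T). eapply typ_inst; eauto.
  - econstructor; eauto.
  - assert (HW : wf (A' :: G)) by (econstructor; eauto).
    intros [|n] B E; simpl in *; rewrite inst_var.
    + inversion E; subst. pose proof (typ_wf H) as HW0. inversion HW0 as [|G0 B0 s0 Hs0]; subst.
      apply typ_conv with (lift 1 A') s0.
      * constructor; auto.
      * apply (weak1 (T := Srt s0)); auto.
      * apply bc_lift; apply bc_sym; auto.
    + constructor; auto.
Qed.

Lemma sr1 : forall G M T, typ G M T -> forall M', beta1 M M' -> typ G M' T.
Proof.
  intros G M T H; induction H; intros M' Hb.
  - inversion Hb.
  - inversion Hb.
  - inversion Hb as [| | | | | A0 A1 B0 Hab | A0 B0 B1 Hab]; subst.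
    + assert (HA' := IHtyp1 _ Hab). econstructor; eauto.
      eapply ctx_conv0; eauto. apply rst_step; auto.
    + econstructor; eauto.
  - inversion Hb as [| | | A0 A1 M0 Hab | A0 M0 M1 Hab | |]; subst.
    + assert (HP := IHtyp2 (Pi A1 B) (@beta_pi_l _ A A1 B Hab)).
      destruct (gen_pi HP) as [s1 [s2 [s3 [HA' _]]]].
      apply typ_conv with (Pi A1 B) s; auto.
      * apply typ_lam with s; auto. apply ctx_conv0 with A s1; auto. apply rst_step; auto.
      * apply bc_sym, rst_step; constructor; auto.
    + econstructor; eauto.
  - inversion Hb as [A0 M0 N0 | M0 M1 N0 Hab | M0 N0 N1 Hab | | | |]; subst.
    + destruct (gen_lam H) as [B0 [s [HM0 [HP0 Hc]]]].
      destruct (conv_pi Hc) as [HcA HcB].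
      destruct (gen_pi HP0) as [s1 [s2 [s3 [HA0 _]]]].
      destruct (type_correct H) as [[s' E] | [s' HP]]; [discriminate|].
      destruct (gen_pi HP) as [t1 [t2 [t3 [_ [HB _]]]]].
      apply typ_conv with (subst N B0) t2.
      * eapply typ_subst; eauto. apply typ_conv with A s1; auto. apply bc_sym; auto.
      * apply (typ_subst (T := Srt t2) HB); auto.
      * apply bc_subst_r; auto.
    + econstructor; eauto.
    + destruct (type_correct H) as [[s' E] | [s' HP]]; [discriminate|].
      destruct (gen_pi HP) as [t1 [t2 [t3 [_ [HB _]]]]].
      apply typ_conv with (subst N1 B) t2.
      * econstructor; eauto.
      * apply (typ_subst (T := Srt t2) HB); auto.
      * apply bc_sym, bs_bc, bs_subst; auto using bs_refl, bs_step.
  - econstructor; eauto.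
Qed.

Lemma sr : forall G M T M', typ G M T -> beta_star M M' -> typ G M' T.
Proof.
  intros G M T M' H Hb; revert H; induction Hb; intros; eauto using sr1.
Qed.

Lemma typ_red_type : forall G M T T' s, typ G M T -> typ G T (Srt s) -> beta_star T T' -> typ G M T'.
Proof.
  intros. apply typ_conv with T s; auto. eapply sr; eauto. apply bs_bc; auto.
Qed.

Lemma uniq : functional P -> forall G M T1, typ G M T1 -> forall T2, typ G M T2 -> beta_conv T1 T2.
Proof.
  intros [Fa Fr] G M T1 H; induction H; intros T2 H2.
  - destruct (gen_srt H2) as [s' [? ?]]. rewrite (Fa _ _ _ H0 H1); auto.
  - destruct (gen_var H2) as [A' [E ?]]. rewrite H0 in E; inversion E; subst; auto.
  - destruct (gen_pi H2) as [t1 [t2 [t3 [HA [HB [Hr Hc]]]]]].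
    pose proof (conv_srt (IHtyp1 _ HA)); pose proof (conv_srt (IHtyp2 _ HB)). subst.
    rewrite (Fr _ _ _ _ H1 Hr); auto.
  - destruct (gen_lam H2) as [B' [s' [HM [_ Hc]]]].
    eapply bc_trans; [|eauto]. apply bc_pi; auto using bc_refl.
  - destruct (gen_app H2) as [A' [B' [HM [HN Hc]]]].
    destruct (conv_pi (IHtyp1 _ HM)) as [_ HcB].
    eapply bc_trans; [|eauto]. apply bc_subst_r; auto.
  - eapply bc_trans; [apply bc_sym; eauto | auto].
Qed.

End Meta.

Set Implicit Arguments.

Section Emb.
Context {srt : Type}.
Notation tm := (term srt).
Notation tm' := (term (option srt)).

Lemma emb_lift : forall (t : tm) n k, emb (lift_rec n t k) = lift_rec n (emb t) k.
Proof.
  induction t; intros; simpl; f_equal; auto. destruct (k <=? n); auto.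
Qed.

Lemma emb_subst_rec : forall (t N : tm) k, emb (subst_rec N t k) = subst_rec (emb N) (emb t) k.
Proof.
  induction t; intros; simpl; f_equal; auto.
  destruct (n <? k); auto. destruct (n =? k); auto. unfold lift; apply emb_lift.
Qed.

Lemma emb_subst : forall (t N : tm), emb (subst N t) = subst (emb N) (emb t).
Proof. intros; apply emb_subst_rec. Qed.

Lemma emb_lift1 : forall (t : tm) n, emb (lift n t) = lift n (emb t).
Proof. intros; apply emb_lift. Qed.

Lemma beta1_emb : forall (M M' : tm), beta1 M M' -> beta1 (emb M) (emb M').
Proof.
  intros M M' H; induction H; simpl; try (constructor; auto; fail).
  rewrite emb_subst; constructor.
Qed.

Lemma bs_emb : forall (M M' : tm), beta_star M M' -> beta_star (emb M) (emb M').
Proof. intros M M' H; induction H; [apply bs_step, beta1_emb; auto | apply bs_refl | eapply bs_trans; eauto]. Qed.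
Lemma bc_emb : forall (M M' : tm), beta_conv M M' -> beta_conv (emb M) (emb M').
Proof. intros M M' H; induction H; [apply rst_step, beta1_emb; auto | apply bc_refl | apply bc_sym; auto | eapply bc_trans; eauto]. Qed.

Lemma emb_inj : forall (M N : tm), emb M = emb N -> M = N.
Proof.
  induction M; destruct N; simpl; intros E; try discriminate; inversion E; subst; f_equal; auto.
Qed.

Lemma emb_beta1_inv : forall (M : tm) (N : tm'), beta1 (emb M) N -> exists M', N = emb M' /\ beta1 M M'.
Proof.
  induction M; intros N H; simpl in H; inversion H; subst.
  - destruct M1; simpl in *; try discriminate. inversion H1; subst.
    exists (subst M2 M1_2); split; [rewrite emb_subst; auto | constructor].
  - destruct (IHM1 _ H3) as [X [? ?]]; subst; exists (App X M2); split; auto; constructor; auto.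
  - destruct (IHM2 _ H3) as [X [? ?]]; subst; exists (App M1 X); split; auto; constructor; auto.
  - destruct (IHM1 _ H3) as [X [? ?]]; subst; exists (Lam X M2); split; auto; constructor; auto.
  - destruct (IHM2 _ H3) as [X [? ?]]; subst; exists (Lam M1 X); split; auto; constructor; auto.
  - destruct (IHM1 _ H3) as [X [? ?]]; subst; exists (Pi X M2); split; auto; constructor; auto.
  - destruct (IHM2 _ H3) as [X [? ?]]; subst; exists (Pi M1 X); split; auto; constructor; auto.
Qed.

Lemma emb_bs_inv : forall (M : tm) (N : tm'), beta_star (emb M) N -> exists M', N = emb M' /\ beta_star M M'.
Proof.
  intros M N H. apply clos_rt_rt1n in H. remember (emb M) as X eqn:E. revert M E.
  induction H; intros M E; subst.
  - exists M; split; auto using bs_refl.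
  - destruct (emb_beta1_inv _ H) as [M1 [? ?]]; subst.
    destruct (IHclos_refl_trans_1n M1 eq_refl) as [M2 [? ?]]; subst.
    exists M2; split; auto. eapply bs_trans; eauto using bs_step.
Qed.

Lemma bc_emb_inv : forall (A B : tm), beta_conv (emb A) (emb B) -> beta_conv A B.
Proof.
  intros A B H. destruct (church_rosser H) as [P [H1 H2]].
  destruct (emb_bs_inv _ H1) as [A1 [E1 ?]]; destruct (emb_bs_inv _ H2) as [B1 [E2 ?]]; subst.
  apply emb_inj in E2; subst. eapply bc_trans; [apply bs_bc; eauto | apply bc_sym, bs_bc; auto].
Qed.

Lemma subst_srt_inv : forall (B N : tm') k x, subst_rec N B k = Srt x ->
  B = Srt x \/ (B = Var k /\ lift k N = Srt x).
Proof.
  destruct B; intros N k x E; simpl in E; try discriminate; auto.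
  destruct (Nat.ltb_spec n k); try discriminate.
  destruct (Nat.eqb_spec n k); try discriminate. subst; auto.
Qed.

Lemma lift_srt_inv : forall (N : tm') n k x, lift_rec n N k = Srt x -> N = Srt x.
Proof. destruct N; intros; simpl in *; try discriminate; auto. destruct (k <=? n); discriminate. Qed.

End Emb.

Scheme wf_mind := Induction for wf Sort Prop with typ_mind := Induction for typ Sort Prop.

Section Star.
Context {srt : Type} (S : spec srt).
Notation tm := (term srt).
Notation tm' := (term (option srt)).
Notation SS := (completion S).

Lemma nth_map_emb : forall (G : list tm) n, nth_error (map emb G) n = option_map emb (nth_error G n).
Proof. induction G; destruct n; simpl; auto. Qed.

Lemma emb_typ_wf :
  (forall G, wf S G -> wf SS (map emb G)) /\
  (forall G M T, typ S G M T -> typ SS (map emb G) (emb M) (emb T)).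
Proof.
  set (P0 := fun G (_ : wf S G) => wf SS (map emb G)).
  set (P1 := fun G M T (_ : typ S G M T) => typ SS (map emb G) (emb M) (emb T)).
  split; [apply (@wf_mind srt S P0 P1) | apply (@typ_mind srt S P0 P1)]; unfold P0, P1;
  intros; simpl in *.
  all: try (constructor; auto; fail).
  all: try (econstructor; eauto; fail).
  all: try (rewrite emb_lift1; constructor; auto; rewrite nth_map_emb, e; auto; fail).
  all: try (apply typ_pi with (Some s1) (Some s2); auto; simpl; exists s1, s2; auto; fail).
  all: try (rewrite emb_subst; econstructor; eauto; fail).
  all: try (econstructor; eauto; apply bc_emb; auto; fail).
Qed.

Lemma completion_functional : functional S -> functional SS.
Proof.
  intros [Fa Fr]; split.
  - intros [s|] [s1|] [s2|]; simpl; intros H1 H2; try contradiction; auto.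
    + f_equal; eauto.
    + exfalso; apply H2; eauto.
    + exfalso; apply H1; eauto.
  - intros x y [s3|] [s3'|]; simpl; intros H1 H2.
    + destruct H1 as [a [b [? [? ?]]]]; destruct H2 as [a' [b' [? [? ?]]]]; subst.
      inversion H2; inversion H3; subst. f_equal; eauto.
    + exfalso; apply H2. destruct H1 as [a [b [? [? ?]]]]; eauto 7.
    + exfalso; apply H1. destruct H2 as [a [b [? [? ?]]]]; eauto 7.
    + auto.
Qed.

Lemma tau_untyp : forall G T, ~ typ SS G (Srt None) T.
Proof. intros G T H. destruct (gen_srt H) as [s' [Hx _]]. simpl in Hx. contradiction. Qed.

Lemma tau_types : forall G T, typ SS G T (Srt None) ->
  (exists s, T = Srt (Some s)) \/ (exists A B, T = Pi A B).
Proof.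
  intros G T H. remember (Srt None) as X. induction H; subst.
  - destruct s1; simpl in H0; [eauto | contradiction].
  - destruct (wf_nth n H H0) as [s Hs]. apply lift_srt_inv in HeqX; subst.
    exfalso; simpl in Hs; eapply tau_untyp; eauto.
  - eauto.
  - discriminate.
  - exfalso. destruct (subst_srt_inv _ _ _ HeqX) as [E | [E1 E2]]; subst.
    + destruct (type_correct H) as [[s E] | [s HP]]; [discriminate|].
      destruct (gen_pi HP) as [s1 [s2 [s3 [_ [HB _]]]]]. eapply tau_untyp; eauto.
    + unfold lift in E2; rewrite lift0 in E2; subst. eapply tau_untyp; eauto.
  - exfalso; eapply tau_untyp; eauto.
Qed.

End Star.

Set Implicit Arguments.

Section Gen.
Context {srt : Type} (P : spec srt).
Notation tm := (term srt).

Lemma styped_shift : forall G X, wf P (X :: G) -> styped P G (fun i => Var (S i)) (X :: G).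
Proof.
  intros G X HW n A E. replace (inst (fun i => Var (S i)) (lift (S n) A)) with (lift (S (S n)) A).
  - constructor; auto.
  - rewrite (inst_shift_var _ 1), lift_lift; auto.
Qed.

Lemma styped_scons : forall G N A, typ P G N A -> styped P (A :: G) (scons N Var) G.
Proof.
  intros G N A HN [|n] B E; simpl in *.
  - inversion E; subst. rewrite <- subst_as_inst, subst_lift1; auto.
  - rewrite inst_lift_S. simpl.
    replace (inst (fun i => Var (S (n + i))) B) with (lift (S n) B) by (rewrite <- inst_shift_var; reflexivity).
    constructor; auto. eapply typ_wf; eauto.
Qed.

Lemma styped_ctx : forall G A A' s, wf P (A :: G) -> typ P G A' (Srt s) -> beta_conv A A' ->
  styped P (A :: G) Var (A' :: G).
Proof.
  intros G A A' s HW HA' Hc.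
  assert (HW' : wf P (A' :: G)) by (econstructor; eauto).
  intros [|n] B E; simpl in *; rewrite inst_var.
  - inversion E; subst. inversion HW as [|G0 B0 s0 Hs0]; subst.
    apply typ_conv with (lift 1 A') s0.
    + constructor; auto.
    + apply (weak1 (T := Srt s0)); auto.
    + apply bc_lift; apply bc_sym; auto.
  - constructor; auto.
Qed.

Lemma conv_types_sort : functional P -> forall G A B x y, typ P G A (Srt x) -> typ P G B (Srt y) ->
  beta_conv A B -> x = y.
Proof.
  intros HF G A B x y HA HB Hc. destruct (church_rosser Hc) as [C [H1 H2]].
  apply conv_srt. apply (uniq HF (sr HA H1) (sr HB H2)).
Qed.

End Gen.

Section Sem.
Context {srt : Type} (Sp : spec srt) (HF : functional Sp).
Notation tm := (term srt).
Notation tm' := (term (option srt)).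
Notation SS := (completion Sp).

Lemma HFS : functional SS.
Proof. apply completion_functional; auto. Qed.

Inductive sk := Lv | Fn (a b : sk).

Definition TyS (D : list tm) (T : tm) := (exists s, typ Sp D T (Srt s)) \/ (exists s, T = Srt s).

Definition LS (D : list tm) (T M : tm') := exists T' M', beta_conv T (emb T') /\ beta_star M (emb M') /\
  typ Sp D M' T' /\ TyS D T'.

Fixpoint I (k : sk) (D : list tm) (T M : tm') : Prop :=
  match k with
  | Lv => LS D T M
  | Fn a b => exists A B, beta_conv T (Pi A B) /\
      forall G0 N, wf Sp (G0 ++ D) -> I a (G0 ++ D) (lift (length G0) A) N ->
        I b (G0 ++ D) (subst N (lift_rec (length G0) B 1)) (App (lift (length G0) M) N)
  end.

Lemma I_conv : forall k D T T' M, I k D T M -> beta_conv T T' -> I k D T' M.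
Proof.
  destruct k; simpl; intros D T T' M H Hc.
  - destruct H as [T1 [M1 [? ?]]]; exists T1, M1; split; eauto using bc_trans, bc_sym.
  - destruct H as [A [B [? ?]]]; exists A, B; split; eauto using bc_trans, bc_sym.
Qed.

Lemma I_back : forall k D T M M1, beta_star M M1 -> I k D T M1 -> I k D T M.
Proof.
  induction k; simpl; intros D T M M1 Hb H.
  - destruct H as [T1 [M2 [? [? [? ?]]]]]; exists T1, M2; repeat split; eauto using bs_trans.
  - destruct H as [A [B [? H]]]; exists A, B; split; auto.
    intros G0 N HW HN. eapply IHk2; [|apply H; eauto].
    apply bs_app; [apply bs_lift; auto | apply bs_refl].
Qed.

Lemma TyS_weak : forall D G0 T, TyS D T -> wf Sp (G0 ++ D) -> TyS (G0 ++ D) (lift (length G0) T).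
Proof.
  intros D G0 T [[s H] | [s E]] HW.
  - left; exists s. apply (weakn (T := Srt s)); auto.
  - right; exists s; subst; reflexivity.
Qed.

Lemma I_weak : forall k D T M G0, I k D T M -> wf Sp (G0 ++ D) ->
  I k (G0 ++ D) (lift (length G0) T) (lift (length G0) M).
Proof.
  destruct k as [|a b]; simpl; intros D T M G0 H HW.
  - destruct H as [T1 [M1 [H1 [H2 [H3 H4]]]]].
    exists (lift (length G0) T1), (lift (length G0) M1); repeat split.
    + rewrite emb_lift1; apply bc_lift; auto.
    + rewrite emb_lift1; apply bs_lift; auto.
    + apply weakn; auto.
    + apply TyS_weak; auto.
  - destruct H as [A [B [Hc H]]].
    exists (lift (length G0) A), (lift_rec (length G0) B 1); split.
    + pose proof (bc_lift (length G0) 0 Hc) as Hc'; simpl in Hc'; exact Hc'.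
    + intros G1 N HW1 HN.
      specialize (H (G1 ++ G0) N). rewrite <- app_assoc, length_app in H.
      rewrite lift_lift in HN. specialize (H HW1 HN).
      rewrite lift_rec_lift_rec1, lift_lift; auto.
Qed.

Inductive SkOf : list tm' -> tm' -> sk -> Prop :=
| SkLv : forall G T, ((exists s, typ SS G T (Srt (Some s))) \/ (exists s, T = Srt (Some s))) -> SkOf G T Lv
| SkFn : forall G A B a b, typ SS G (Pi A B) (Srt None) -> SkOf G A a -> SkOf (A :: G) B b ->
    SkOf G (Pi A B) (Fn a b).

Lemma lv_none_false : forall G T, typ SS G T (Srt None) ->
  ((exists s, typ SS G T (Srt (Some s))) \/ (exists s, T = Srt (Some s))) -> exists s, T = Srt (Some s).
Proof.
  intros G T H [[s Hs] | E]; auto.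
  exfalso. pose proof (conv_srt (uniq HFS H Hs)); discriminate.
Qed.

Lemma SkOf_uniq : forall G T k1, SkOf G T k1 -> forall k2, SkOf G T k2 -> k1 = k2.
Proof.
  intros G T k1 H; induction H; intros k2 H2; inversion H2; subst; auto.
  - exfalso. match goal with Ht : typ SS _ _ (Srt None) |- _ => destruct (lv_none_false Ht H) as [s E] end; discriminate.
  - exfalso. match goal with Hl : (exists s, _) \/ _ |- _ => destruct (lv_none_false H Hl) as [s E] end; discriminate.
  - f_equal; auto.
Qed.

Lemma SkOf_inst : forall G T k, SkOf G T k -> forall D sg, wf SS D -> styped SS G sg D -> SkOf D (inst sg T) k.
Proof.
  intros G T k H; induction H; intros D sg HD Hs.
  - constructor. destruct H as [[s H] | [s E]].
    + left; exists s; apply (typ_inst (T := Srt (Some s)) H); auto.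
    + right; subst; simpl; eauto.
  - simpl. assert (HP := typ_inst (T := Srt None) H HD Hs). simpl in HP.
    destruct (gen_pi HP) as [s1 [s2 [s3 [HA _]]]].
    constructor; auto. apply IHSkOf2; [econstructor; eauto | eapply styped_up; eauto].
Qed.

Lemma SkOf_weak : forall G T k X, SkOf G T k -> wf SS (X :: G) -> SkOf (X :: G) (lift 1 T) k.
Proof.
  intros. rewrite <- (inst_shift_var _ 1). eapply SkOf_inst; eauto. apply styped_shift; auto.
Qed.

Lemma SkOf_subst : forall G A B k N, SkOf (A :: G) B k -> typ SS G N A -> SkOf G (subst N B) k.
Proof.
  intros. rewrite subst_as_inst. eapply SkOf_inst; eauto. eapply typ_wf; eauto. apply styped_scons; auto.
Qed.

Lemma SkOf_exists : forall T G x, typ SS G T (Srt x) -> exists k, SkOf G T k.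
Proof.
  induction T; intros G x H; destruct x as [sx|];
    try (exists Lv; constructor; left; exists sx; auto; fail).
  all: destruct (tau_types H) as [[s0 E] | [A0 [B0 E]]]; try discriminate.
  - inversion E; subst. exists Lv; constructor; right; eauto.
  - inversion E; subst. destruct (gen_pi H) as [x1 [x2 [x3 [HA [HB _]]]]].
    destruct (IHT1 _ _ HA) as [a Ha]. destruct (IHT2 _ _ HB) as [b Hb].
    exists (Fn a b); constructor; auto.
Qed.

Lemma SkOf_conv : forall G B k, SkOf G B k -> forall A, beta_conv A B ->
  ((exists y, typ SS G A (Srt y)) \/ (exists s, A = Srt (Some s))) -> SkOf G A k.
Proof.
  intros G B k H; induction H; intros A' Hc HA.
  - destruct HA as [[y Hy] | [s E]]; [| subst; constructor; eauto].
    destruct y as [s|]; [constructor; eauto|].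
    destruct (tau_types Hy) as [[s E] | [A1 [B1 E]]]; subst; [constructor; eauto|].
    exfalso. destruct H as [[s Hs] | [s E]].
    + pose proof (conv_types_sort HFS Hy Hs Hc); discriminate.
    + subst. eapply conv_pi_srt; eauto.
  - destruct HA as [[y Hy] | [s E]]; [| subst; exfalso; eapply conv_pi_srt; apply bc_sym; eauto].
    destruct y as [s|].
    { exfalso. pose proof (conv_types_sort HFS Hy H Hc); discriminate. }
    destruct (tau_types Hy) as [[s E] | [A1 [B1 E]]]; subst.
    { exfalso; eapply conv_pi_srt; apply bc_sym; eauto. }
    destruct (conv_pi Hc) as [HcA HcB].
    destruct (gen_pi Hy) as [x1 [x2 [x3 [HA1 [HB1 _]]]]].
    destruct (gen_pi H) as [y1 [y2 [y3 [HA0 [HB0 _]]]]].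
    constructor; auto.
    + apply IHSkOf1; eauto.
    + assert (HB1' : typ SS (A :: G) B1 (Srt x2)).
      { apply ctx_conv0 with A1 y1; auto. }
      assert (Hk := IHSkOf2 B1 HcB (or_introl (ex_intro _ x2 HB1'))).
      rewrite <- (inst_var B1). eapply SkOf_inst; eauto.
      * econstructor; eauto.
      * eapply styped_ctx; eauto. econstructor; eauto. apply bc_sym; auto.
Qed.

Definition GoodEnv (G : list tm') (D : list tm) (sg : nat -> tm') :=
  forall n A, nth_error G n = Some A -> forall k, SkOf G (lift (S n) A) k ->
    I k D (inst sg (lift (S n) A)) (sg n).

Lemma LS_sort : forall D s M, LS D (Srt (Some s)) M -> exists M', beta_star M (emb M') /\ typ Sp D M' (Srt s).
Proof.
  intros D s M [T' [M' [Hc [Hb [Ht Hty]]]]]. exists M'; split; auto.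
  assert (Hc' : beta_conv T' (Srt s)) by (apply bc_emb_inv; apply bc_sym; auto).
  destruct (church_rosser Hc') as [C [H1 H2]]. apply star_srt in H2; subst.
  destruct Hty as [[s' Hs'] | [s' E]].
  - eapply typ_red_type; eauto.
  - subst. apply star_srt in H1. inversion H1; subst; auto.
Qed.

Lemma skof_ctx_entry : forall G n B, wf SS G -> nth_error G n = Some B -> exists k, SkOf G (lift (S n) B) k.
Proof.
  intros. destruct (wf_nth n H H0) as [x Hx]. eapply SkOf_exists; eauto.
Qed.

Lemma GE_up_lv : forall G D sg A A' s1 s1', wf SS G -> GoodEnv G D sg -> typ SS G A (Srt (Some s1)) ->
  beta_conv (inst sg A) (emb A') -> typ Sp D A' (Srt s1') -> GoodEnv (A :: G) (A' :: D) (up sg).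
Proof.
  intros G D sg A A' s1 s1' HG HE HA Hc HA'.
  assert (HW : wf SS (A :: G)) by (econstructor; eauto).
  assert (HW' : wf Sp (A' :: D)) by (econstructor; eauto).
  intros [|n] B E k Hk; simpl in E.
  - inversion E; subst.
    assert (Hl : SkOf (B :: G) (lift 1 B) Lv).
    { constructor; left; exists s1. apply (weak1 (T := Srt (Some s1))); auto. }
    rewrite (SkOf_uniq Hk Hl). simpl.
    exists (lift 1 A'), (Var 0); repeat split.
    + rewrite inst_up_lift1, emb_lift1. apply bc_lift; auto.
    + apply bs_refl.
    + constructor; auto.
    + left; exists s1'. apply (weak1 (T := Srt s1')); auto.
  - destruct (skof_ctx_entry n HG E) as [k' Hk'].
    assert (Hw := SkOf_weak Hk' HW). rewrite <- lift_S_split in Hw.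
    rewrite (SkOf_uniq Hk Hw).
    assert (HI := HE n B E k' Hk').
    assert (HI' := I_weak _ _ _ _ [A'] HI HW'). simpl in HI'.
    simpl. rewrite lift_S_split, inst_up_lift1, <- lift1_ren. exact HI'.
Qed.

Lemma GE_up_fn : forall G D sg A a G0 N, wf SS (A :: G) -> GoodEnv G D sg -> wf Sp (G0 ++ D) -> SkOf G A a ->
  I a (G0 ++ D) (lift (length G0) (inst sg A)) N ->
  GoodEnv (A :: G) (G0 ++ D) (scons N (fun i => lift (length G0) (sg i))).
Proof.
  intros G D sg A a G0 N HW HE HWD Ha HN.
  assert (HG : wf SS G) by (inversion HW; eapply typ_wf; eauto).
  intros [|n] B E k Hk; simpl in E.
  - inversion E; subst.
    rewrite (SkOf_uniq Hk (SkOf_weak Ha HW)). simpl.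
    rewrite (inst_lift_S _ _ 0). simpl. rewrite <- lift_inst_comm. exact HN.
  - destruct (skof_ctx_entry n HG E) as [k' Hk'].
    assert (Hw := SkOf_weak Hk' HW). rewrite <- lift_S_split in Hw.
    rewrite (SkOf_uniq Hk Hw).
    assert (HI := HE n B E k' Hk').
    assert (HI' := I_weak _ _ _ _ G0 HI HWD).
    simpl. rewrite lift_inst_comm, !inst_lift_S in HI'. rewrite inst_lift_S. simpl. exact HI'.
Qed.

Lemma FL : forall G M T, typ SS G M T -> forall D sg, wf Sp D -> GoodEnv G D sg ->
  forall k, SkOf G T k -> I k D (inst sg T) (inst sg M).
Proof.
  intros G M T H; induction H; intros D sg HD HE k Hk.
  -
    inversion Hk as [G1 T1 Hl|]; subst.
    destruct s2 as [t2|]; [| exfalso; destruct Hl as [[s Hs]|[s E]]; [eapply tau_untyp; eauto | discriminate]].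
    destruct s1 as [t1|]; simpl in H0; [|contradiction].
    simpl. exists (Srt t2), (Srt t1); repeat split; simpl; auto using bc_refl, bs_refl.
    + constructor; auto.
    + right; eauto.
  -
    simpl. apply HE; auto.
  -
    inversion Hk as [G1 T1 Hl|]; subst.
    destruct s3 as [t3|]; [| exfalso; destruct Hl as [[s Hs]|[s E]]; [eapply tau_untyp; eauto | discriminate]].
    simpl in H1. destruct H1 as [a [b [E1 [E2 Hr]]]]; subst.
    assert (IA := IHtyp1 D sg HD HE Lv (SkLv (or_intror (ex_intro _ a eq_refl)))).
    simpl in IA. destruct (LS_sort IA) as [A' [HAr HA']].
    assert (HE' := GE_up_lv (typ_wf H) HE H (bs_bc HAr) HA').
    assert (HW' : wf Sp (A' :: D)) by (econstructor; eauto).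
    assert (IB := IHtyp2 (A' :: D) (up sg) HW' HE' Lv (SkLv (or_intror (ex_intro _ b eq_refl)))).
    simpl in IB. destruct (LS_sort IB) as [B' [HBr HB']].
    simpl. exists (Srt t3), (Pi A' B'); repeat split; simpl; auto using bc_refl.
    + apply bs_pi; auto.
    + econstructor; eauto.
    + right; eauto.
  -
    destruct (gen_pi H0) as [x1 [x2 [x3 [HA [HB [Hr Hc]]]]]]. apply conv_srt in Hc; subst x3.
    destruct s as [s3|].
    + assert (Hl : SkOf G (Pi A B) Lv) by (constructor; left; eauto).
      rewrite (SkOf_uniq Hk Hl).
      simpl in Hr. destruct Hr as [a [b [E1 [E2 Hr]]]]; subst.
      assert (IP := IHtyp2 D sg HD HE Lv (SkLv (or_intror (ex_intro _ s3 eq_refl)))).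
      simpl in IP. destruct (LS_sort IP) as [P' [HPr HP']].
      destruct (star_pi HPr) as [A1 [B1 [EP [HAr HBr]]]].
      destruct P' as [| | | |A' B']; simpl in EP; try discriminate. inversion EP; subst.
      destruct (gen_pi HP') as [t1 [t2 [t3 [HA' [HB' _]]]]].
      assert (HE' := GE_up_lv (typ_wf H0) HE HA (bs_bc HAr) HA').
      assert (HW' : wf Sp (A' :: D)) by (econstructor; eauto).
      assert (IM := IHtyp1 (A' :: D) (up sg) HW' HE' Lv (SkLv (or_introl (ex_intro _ b HB)))).
      destruct IM as [T'' [M' [Hc1 [Hb1 [Ht1 _]]]]].
      simpl. exists (Pi A' B'), (Lam A' M'); repeat split.
      * apply bs_bc; apply bs_pi; auto.
      * apply bs_lam; auto.
      * apply typ_lam with s3; auto. apply typ_conv with T'' t2; auto. apply bc_emb_inv.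
        eapply bc_trans; [apply bc_sym; eauto | apply bs_bc; auto].
      * left; eauto.
    + inversion Hk as [G1 T1 Hl | G1 A1 B1 a b Hp Ha Hb]; subst.
      * exfalso. destruct (lv_none_false H0 Hl) as [? E]; discriminate.
      * simpl. exists (inst sg A), (inst (up sg) B); split; [apply bc_refl|].
        intros G0 N HW HN.
        apply I_back with (inst (scons N (fun i => lift (length G0) (sg i))) M).
        { replace (inst (scons N (fun i => lift (length G0) (sg i))) M)
            with (subst N (lift_rec (length G0) (inst (up sg) M) 1))
            by (rewrite lift_inst_up, subst_scons; auto).
          apply bs_step. unfold lift at 1; simpl. constructor. }
        rewrite lift_inst_up, subst_scons.
        apply IHtyp1; auto.
        eapply GE_up_fn; eauto. eapply typ_wf; eauto.
  -
    destruct (type_correct H) as [[s E] | [x HP]]; [discriminate|].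
    destruct (gen_pi HP) as [x1 [x2 [x3 [HA [HB [Hr Hc]]]]]]. apply conv_srt in Hc; subst x3.
    destruct x as [s3|].
    + simpl in Hr; destruct Hr as [a [b [E1 [E2 Hr]]]]; subst.
      assert (IM := IHtyp1 D sg HD HE Lv (SkLv (or_introl (ex_intro _ s3 HP)))).
      destruct IM as [T' [M' [Hc1 [Hb1 [Ht1 Hty1]]]]]. simpl in Hc1.
      destruct (church_rosser Hc1) as [C [H1 H2]].
      destruct (star_pi H1) as [C1 [C2 [EC [HC1 HC2]]]]; subst C.
      destruct (emb_bs_inv _ H2) as [T'' [ET HT]].
      destruct T'' as [| | | |A'' B'']; simpl in ET; try discriminate. inversion ET; subst.
      destruct Hty1 as [[t Ht] | [t Et]]; [| subst; apply star_srt in HT; discriminate].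
      assert (HT'' := sr Ht HT).
      assert (HM' := typ_red_type Ht1 Ht HT).
      destruct (gen_pi HT'') as [t1 [t2 [t3 [HA'' [HB'' _]]]]].
      assert (IN := IHtyp2 D sg HD HE Lv (SkLv (or_introl (ex_intro _ a HA)))).
      destruct IN as [A1 [N' [Hc2 [Hb2 [Ht2 _]]]]].
      assert (HN' : typ Sp D N' A'').
      { apply typ_conv with A1 t1; auto. apply bc_emb_inv.
        eapply bc_trans; [apply bc_sym; eauto | apply bs_bc; auto]. }
      assert (Hl : SkOf G (subst N B) Lv).
      { constructor; left; exists b. apply (typ_subst (T := Srt (Some b)) HB); auto. }
      rewrite (SkOf_uniq Hk Hl). simpl.
      exists (subst N' B''), (App M' N'); repeat split.
      * rewrite inst_subst, emb_subst. apply bs_bc, bs_subst; auto.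
      * apply bs_app; auto.
      * econstructor; eauto.
      * left; exists t2. apply (typ_subst (T := Srt t2) HB''); auto.
    + destruct (SkOf_exists HA) as [a Ha]. destruct (SkOf_exists HB) as [b Hb].
      assert (Hf : SkOf G (Pi A B) (Fn a b)) by (constructor; auto).
      assert (IM := IHtyp1 D sg HD HE _ Hf). simpl in IM.
      destruct IM as [A0 [B0 [Hc0 HK]]].
      destruct (conv_pi Hc0) as [HcA HcB].
      assert (IN := IHtyp2 D sg HD HE a Ha).
      specialize (HK [] (inst sg N) HD). simpl in HK. unfold lift in HK. rewrite !lift0 in HK.
      eapply I_conv in IN; [|exact HcA]. specialize (HK IN).
      rewrite (SkOf_uniq Hk (SkOf_subst Hb H0)).
      rewrite inst_subst. eapply I_conv; [exact HK|]. apply bc_subst_r. apply bc_sym; auto.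
  -
    assert (HAk : SkOf G A k).
    { apply SkOf_conv with B; auto.
      destruct (type_correct H) as [[y E] | [y Hy]]; [|left; eauto].
      subst. destruct y as [y|]; [right; eauto|].
      exfalso. destruct (church_rosser H1) as [C [C1 C2]]. apply star_srt in C1; subst.
      eapply tau_untyp. eapply sr; eauto. }
    eapply I_conv; [apply IHtyp1; eauto | apply bc_inst; auto].
Qed.

End Sem.

Theorem corollary5p23 :
  forall (srt : Type) (S : spec srt), functional S ->
  forall (G : context srt) (A : term srt) (M : term (option srt)),
    wf S G ->
    (exists s : srt, typ S G A (Srt s) \/ A = Srt s) ->
    typ (completion S) (List.map emb G) M (emb A) ->
    exists M' : term srt, beta_star M (emb M') /\ typ S G M' A.
Proof.
  intros srt S HF G A M HG [s HA] HM.
  assert (HE : GoodEnv S (map emb G) G Var).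
  { intros n A0 E k Hk. rewrite nth_map_emb in E.
    destruct (nth_error G n) as [t|] eqn:E1; inversion E; subst.
    destruct (wf_nth n HG E1) as [s0 Hs0].
    assert (He := proj2 (emb_typ_wf S) _ _ _ Hs0). simpl in He. rewrite emb_lift1 in He.
    assert (Hl : SkOf S (map emb G) (lift (Datatypes.S n) (emb t)) Lv).
    { constructor; left; eauto. }
    rewrite (SkOf_uniq HF Hk Hl). simpl. rewrite inst_var.
    exists (lift (Datatypes.S n) t), (Var n); repeat split.
    - rewrite emb_lift1; apply bc_refl.
    - apply bs_refl.
    - constructor; auto.
    - left; eauto. }
  assert (HS : SkOf S (map emb G) (emb A) Lv).
  { constructor. destruct HA as [HA | HA].
    - left; exists s. apply (proj2 (emb_typ_wf S) _ _ _ HA).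
    - right; exists s; subst; reflexivity. }
  assert (HI := FL HF HM HG HE HS). simpl in HI. rewrite !inst_var in HI.
  destruct HI as [T' [M' [Hc [Hb [Ht Hty]]]]].
  exists M'; split; auto.
  assert (Hc' : beta_conv A T') by (apply bc_emb_inv; auto).
  destruct HA as [HA | HA].
  - apply typ_conv with T' s; auto. apply bc_sym; auto.
  - subst. destruct (church_rosser Hc') as [C [C1 C2]]. apply star_srt in C1; subst.
    destruct Hty as [[t Ht'] | [t Et]].
    + eapply typ_red_type; eauto.
    + subst. apply star_srt in C2. inversion C2; subst; auto.
Qed.
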